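(* For any $P,Q\in\mathcal{PP}(n)$, $P\leq Q$ if and only if $\iota(Q)\leq\iota(P)$.
   Context: A plane poset is a finite set with two partial orders $\leq_h,\leq_r$ such that two distinct elements are $\leq_h$-comparable iff they are not $\leq_r$-comparable; $\mathcal{PP}(n)$ is the set of isomorphism classes of plane posets with $n$ elements. On a plane poset, $x\leq y$ iff ($x\leq_h y$ or $x\leq_r y$) is a total order (known fact). For $P,Q\in\mathcal{PP}(n)$, $\theta_{P,Q}$ is the increasing bijection $P\to Q$, and $P\leq Q$ means: for all $x,y\in P$, $\theta_{P,Q}(x)\leq_h\theta_{P,Q}(y)$ in $Q$ implies $x\leq_h y$ in $P$. For a plane poset $P=(P,\leq_h,\leq_r)$, $\iota(P)=(P,\leq_r,\leq_h)$ (the two orders exchanged); it is again a plane poset and $\iota$ is an involution. *)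

(* Defs.v *)
From mathcomp Require Import all_boot.
Set Implicit Arguments. Unset Strict Implicit. Unset Printing Implicit Defensive.

(* A plane poset with n elements, represented on the carrier 'I_n.
   Every isomorphism class in PP(n) has such a representative, and the
   relation [ppleq] below only depends on isomorphism classes. *)

Definition is_porder (T : finType) (r : rel T) :=
  [/\ reflexive r, antisymmetric r & transitive r].

Definition plane_cond (T : finType) (rh rr : rel T) :=
  forall x y : T, x != y -> (rh x y || rh y x) = ~~ (rr x y || rr y x).

Record plane_poset (n : nat) := PlanePoset {
  hle : rel 'I_n;
  rle : rel 'I_n;
  hle_po : is_porder hle;
  rle_po : is_porder rle;
  plane : plane_cond hle rle }.

Lemma plane_cond_swap (T : finType) (rh rr : rel T) :
  plane_cond rh rr -> plane_cond rr rh.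
Proof. by move=> H x y /H ->; rewrite negbK. Qed.

Definition pp_iota n (P : plane_poset n) : plane_poset n :=
  @PlanePoset n (rle P) (hle P) (rle_po P) (hle_po P) (plane_cond_swap (plane P)).

Definition tle n (P : plane_poset n) (x y : 'I_n) := hle P x y || rle P x y.
Definition tlt n (P : plane_poset n) (x y : 'I_n) := (x != y) && tle P x y.

Definition rank n (P : plane_poset n) (x : 'I_n) : nat :=
  #|[pred y | tlt P y x]|.

(* P <= Q : theta_{P,Q} is the increasing bijection P -> Q, i.e. the
   rank-preserving map; theta(x) = x' iff rank_Q x' = rank_P x. *)
Definition ppleq n (P Q : plane_poset n) : Prop :=
  forall x y x' y' : 'I_n,
    rank Q x' = rank P x -> rank Q y' = rank P y ->
    hle Q x' y' -> hle P x y.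

(* Main.v *)
Require Import Defs.
From mathcomp Require Import all_boot.
Set Implicit Arguments. Unset Strict Implicit.

Section S.
Variables (n : nat) (P : plane_poset n).

Lemma hrefl x : hle P x x. Proof. by case: (hle_po P). Qed.
Lemma rrefl x : rle P x x. Proof. by case: (rle_po P). Qed.
Lemma htr x y z : hle P x y -> hle P y z -> hle P x z.
Proof. by case: (hle_po P) => _ _ t; apply: t. Qed.
Lemma rtr x y z : rle P x y -> rle P y z -> rle P x z.
Proof. by case: (rle_po P) => _ _ t; apply: t. Qed.
Lemma hanti x y : hle P x y -> hle P y x -> x = y.
Proof. by case: (hle_po P) => _ a _ h1 h2; apply: a; rewrite h1 h2. Qed.
Lemma ranti x y : rle P x y -> rle P y x -> x = y.
Proof. by case: (rle_po P) => _ a _ h1 h2; apply: a; rewrite h1 h2. Qed.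

Lemma excl x y : x != y -> hle P x y || hle P y x -> rle P x y || rle P y x -> False.
Proof. by move=> /(plane P) E H R; move: E; rewrite H R. Qed.

Lemma tle_trans x y z : tle P x y -> tle P y z -> tle P x z.
Proof.
rewrite /tle.
case: (eqVneq x y) => [->|nxy] //.
case: (eqVneq y z) => [->|nyz] //.
case: (eqVneq x z) => [->|nxz]; first by rewrite hrefl.
have pl := (plane P nxz).
case/orP=> [h1|r1]; case/orP=> [h2|r2].
- by rewrite (htr h1 h2).
- case Hxz: (hle P x z) => //=. case Rxz: (rle P x z) => //.
  move: pl; rewrite Hxz Rxz /=.
  case Hzx: (hle P z x) => /=.
    by move=> _; exfalso; apply: (excl nyz); [rewrite (htr Hzx h1) orbT|rewrite r2].
  move/esym/negbFE=> Rzx; exfalso; apply: (excl nxy); first by rewrite h1.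
  by rewrite (rtr r2 Rzx) orbT.
- case Hxz: (hle P x z) => //=. case Rxz: (rle P x z) => //.
  move: pl; rewrite Hxz Rxz /=.
  case Hzx: (hle P z x) => /=.
    by move=> _; exfalso; apply: (excl nxy); [rewrite (htr h2 Hzx) orbT|rewrite r1].
  move/esym/negbFE=> Rzx; exfalso; apply: (excl nyz); first by rewrite h2.
  by rewrite (rtr Rzx r1) orbT.
- by rewrite (rtr r1 r2) orbT.
Qed.

Lemma tle_anti x y : tle P x y -> tle P y x -> x = y.
Proof.
rewrite /tle; case: (eqVneq x y) => [//|nxy].
case/orP=> [h1|r1]; case/orP=> [h2|r2].
- exact: hanti.
- by exfalso; apply: (excl nxy); [rewrite h1|rewrite r2 orbT].
- by exfalso; apply: (excl nxy); [rewrite h2 orbT|rewrite r1].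
- exact: ranti.
Qed.

Lemma tle_total x y : x != y -> tle P x y || tle P y x.
Proof.
move=> nxy; have := plane P nxy; rewrite /tle.
by case: (hle P x y); case: (hle P y x); case: (rle P x y); case: (rle P y x).
Qed.

Lemma rank_lt x y : x != y -> tle P x y -> rank P x < rank P y.
Proof.
move=> nxy txy; rewrite /rank; apply: proper_card; apply/properP; split.
- apply/subsetP => z; rewrite !inE /tlt => /andP[nzx tzx].
  rewrite (tle_trans tzx txy) andbT; apply/eqP => ezy.
  by move: nxy; rewrite (tle_anti txy) -?ezy ?eqxx.
- by exists x; rewrite !inE /tlt ?eqxx //= txy andbT.
Qed.

Lemma rank_inj x y : rank P x = rank P y -> x = y.
Proof.
move=> e; case: (eqVneq x y) => // nxy; exfalso.
case/orP: (tle_total nxy) => t.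
- by have := rank_lt nxy t; rewrite e ltnn.
- by rewrite eq_sym in nxy; have := rank_lt nxy t; rewrite e ltnn.
Qed.
End S.

Lemma rank_iota n (P : plane_poset n) x : rank (pp_iota P) x = rank P x.
Proof. by apply: eq_card => y; rewrite !inE /tlt /tle /= orbC. Qed.

Lemma keyL n (P Q : plane_poset n) :
  (forall x y x' y', rank Q x' = rank P x -> rank Q y' = rank P y ->
     hle Q x' y' -> hle P x y) ->
  (forall a b a' b', rank P a' = rank Q a -> rank P b' = rank Q b ->
     rle P a' b' -> rle Q a b).
Proof.
move=> H a b a' b' ea eb r.
case: (eqVneq a b) => [->|nab]; first exact: rrefl.
have nab' : a' != b'.
  by apply/eqP => e; move: nab; rewrite (@rank_inj _ Q a b) ?eqxx // -ea -eb e.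
have := plane Q nab.
case Hab: (hle Q a b).
  move=> _; exfalso; apply: (@excl _ P _ _ nab'); last by rewrite r.
  by rewrite (H a' b' a b) ?ea ?eb.
case Hba: (hle Q b a).
  move=> _; exfalso; apply: (@excl _ P _ _ nab'); last by rewrite r.
  by rewrite (H b' a' b a) ?ea ?eb ?orbT.
case Rab: (rle Q a b) => //= /esym/negbFE Rba.
exfalso.
have t1 : tle Q b a by rewrite /tle Rba orbT.
have t2 : tle P a' b' by rewrite /tle r orbT.
have := rank_lt nab' t2; rewrite ea eb.
rewrite eq_sym in nab; have := rank_lt nab t1.
by move=> l1 l2; have := ltn_trans l1 l2; rewrite ltnn.
Qed.

Theorem proposition18 (n : nat) (P Q : plane_poset n) :
  ppleq P Q <-> ppleq (pp_iota Q) (pp_iota P).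
Proof.
split.
- move=> H x y x' y'; rewrite !rank_iota /= => e1 e2; exact: (keyL H e1 e2).
- move=> H x y x' y' e1 e2.
  have := @keyL n (pp_iota Q) (pp_iota P) H x y x' y'.
  by rewrite !rank_iota /=; apply.
Qed.
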